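(* Let $\mathbf d=\mathbf d(n)$ be graphical degree sequences, let $S_1, S_2 \subseteq [n]$, and let $1\le \ell<M/2$ be an integer. Assume $J(\mathbf d) = o(M-2\ell)$ as $n\to\infty$. Then \[ \mathbb P\big(e(S_1 , S_2) \ge \ell\big)\le\binom{d(S_1)}{\ell} (d(S_2))_{\ell} \left(\prod_{i=1}^{\ell} \frac{1+o(1)}{M-2i+2}\right) \le\binom{d(S_1)}{\ell} \frac{(d(S_2))_{\ell}}{(M/2)_{\ell} (2+o(1))^{\ell}}, \] where $e(S_1,S_2)$ is computed in $\mathcal G(n,\mathbf d)$.
   Context: For a sequence $\mathbf d=(d_1,\ldots,d_n)$ of nonnegative integers, $\mathcal G(n,\mathbf d)$ denotes a uniformly random simple graph on $[n]$ in which vertex $i$ has degree $d_i$; $\mathbf d$ is graphical if such a graph exists. $\Delta=\max_i d_i$, $M=\sum_i d_i$, $J(\mathbf d)$ is the sum of the $\Delta$ largest entries of $\mathbf d$, and $d(S)=\sum_{i\in S}d_i$ for $S\subseteq[n]$. For $S_1,S_2\subseteq[n]$, $e(S_1,S_2)$ is the number of edges with one end in $S_1$ and the other end in $S_2$ (when $S_1=S_2$, the number of edges induced by $S_1$). $(x)_k$ is the falling factorial. Asymptotics are as $n\to\infty$. *)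

(* Defs.v *)
From HB Require Import structures.
From mathcomp Require Import all_boot all_order all_algebra.
From mathcomp Require Import all_classical all_reals all_analysis.
Set Implicit Arguments. Unset Strict Implicit. Unset Printing Implicit Defensive.
Import Order.TTheory GRing.Theory Num.Theory.

Definition is_graph n (E : {set {set 'I_n}}) : bool := [forall e in E, #|e| == 2].

Definition deg n (E : {set {set 'I_n}}) (i : 'I_n) : nat := #|[set e in E | i \in e]|.

Definition has_degseq n (d : 'I_n -> nat) (E : {set {set 'I_n}}) : bool :=
  is_graph E && [forall i, deg E i == d i].

Definition graphs_deg n (d : 'I_n -> nat) : {set {set {set 'I_n}}} :=
  [set E | has_degseq d E].

Definition graphical n (d : 'I_n -> nat) : bool := graphs_deg d != finset.set0.

Definition Msum n (d : 'I_n -> nat) : nat := \sum_(i < n) d i.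
Definition Delta n (d : 'I_n -> nat) : nat := \max_(i < n) d i.
Definition dsum n (d : 'I_n -> nat) (S : {set 'I_n}) : nat := \sum_(i in S) d i.
(* J(d): sum of the Delta largest entries of d *)
Definition Jsum n (d : 'I_n -> nat) : nat :=
  \max_(A : {set 'I_n} | #|A| == Delta d) dsum d A.

Definition eS n (E : {set {set 'I_n}}) (S1 S2 : {set 'I_n}) : nat :=
  #|[set e in E | [exists u in S1, exists v in S2, e == [set u; v]]]|.

Definition prob_e_ge (R : realType) n (d : 'I_n -> nat) (S1 S2 : {set 'I_n}) (l : nat) : R :=
  (#|[set E in graphs_deg d | (l <= eS E S1 S2)%N]|%:R / #|graphs_deg d|%:R)%R.

Definition falling (R : realType) (x : R) (k : nat) : R :=
  (\prod_(i < k) (x - i%:R))%R.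

(* Main.v *)
Require Import Defs.
From HB Require Import structures.
From mathcomp Require Import all_boot all_order all_algebra.
From mathcomp Require Import all_classical all_reals all_analysis.
Import Order.TTheory GRing.Theory Num.Theory.
Import numFieldNormedType.Exports.

From mathcomp Require Import zify ring lra.
Set Implicit Arguments. Unset Strict Implicit. Unset Printing Implicit Defensive.
Import fintype finset.

Module Part1.

Section Basics.
Variable n : nat.
Implicit Types (F G H : {set {set 'I_n}}) (w x y u v : 'I_n).

Lemma card_setE (T : finType) (P : pred T) : #|[set x | P x]| = \sum_x (P x : nat).
Proof.
rewrite -sum1_card big_mkcond /=; apply: eq_bigr => x _; rewrite inE; by case: (P x).
Qed.

Lemma deg_setU1 (a : {set 'I_n}) Y w :
  deg (a |: Y) w = ((w \in a) && (a \notin Y)) + deg Y w.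
Proof.
rewrite /deg; case: (boolP (w \in a)) => wa /=.
  have ->: [set e in a |: Y | w \in e] = a |: [set e in Y | w \in e].
    by apply/setP=> e; rewrite !inE; case: (e =P a) => [->|]//=; rewrite wa.
  by rewrite cardsU1 inE wa andbT.
have ->: [set e in a |: Y | w \in e] = [set e in Y | w \in e].
  apply/setP=> e; rewrite !inE; case: (e =P a) => [->|]//=.
  by rewrite (negbTE wa) !andbF.
by rewrite add0n.
Qed.

Lemma deg_setD1 Y (a : {set 'I_n}) w :
  deg Y w = ((w \in a) && (a \in Y)) + deg (Y :\ a) w.
Proof.
rewrite /deg (cardsD1 a [set e in Y | w \in e]) inE andbC; congr (_ + _).
by apply: eq_card => e; rewrite !inE andbA.
Qed.

Lemma deg_sub F G w : F \subset G -> deg F w <= deg G w.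
Proof.
move=> /fintype.subsetP FG; apply: subset_leq_card; apply/fintype.subsetP => e; rewrite !inE.
by case/andP => /FG -> ->.
Qed.

Lemma card_nbr_le F w (P : pred {set 'I_n}) : is_graph F ->
  #|[set y | ([set w; y] \in F) && P [set w; y]]| <= #|[set f in F | (w \in f) && P f]|.
Proof.
move=> /forallP gF.
rewrite -(@card_in_imset _ _ (fun y => [set w; y])); last first.
  move=> y1 y2; rewrite !inE => /andP[h1 _] _ eq.
  have: y1 \in [set w; y2] by rewrite -eq set22.
  rewrite in_set2 => /orP [/eqP y1w|/eqP //].
  have := gF [set w; y1]; rewrite h1 /= cards2 y1w eqxx //.
apply: subset_leq_card; apply/fintype.subsetP => f /imsetP [y]; rewrite inE => /andP[h1 h2] ->.
by rewrite inE h1 set21 h2.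
Qed.

Lemma card_nbr_ge F w : is_graph F ->
  deg F w <= #|[set y | [set w; y] \in F]|.
Proof.
move=> /forallP gF.
apply: (leq_trans _ (leq_imset_card (fun y => [set w; y]) _)).
apply: subset_leq_card; apply/fintype.subsetP => f; rewrite inE => /andP[fF wf].
have := gF f; rewrite fF /= => /cards2P [a [b [ab fab]]].
move: wf; rewrite fab in_set2 => /orP[/eqP->|/eqP->].
  by apply/imsetP; exists b => //; rewrite inE -fab.
by apply/imsetP; exists a; rewrite ?inE finset.setUC -?fab.
Qed.

Lemma card_nbr F w : is_graph F -> #|[set y | [set w; y] \in F]| = deg F w.
Proof.
move=> gF; apply/eqP; rewrite eqn_leq card_nbr_ge // andbT.
have := card_nbr_le w predT gF.
by rewrite /deg; under eq_finset do rewrite andbT; under [in X in _ <= X -> _]eq_finset do rewrite andbT.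
Qed.

Lemma sum_deg F : \sum_w deg F w = \sum_(f in F) #|f|.
Proof.
rewrite /deg.
have E w : #|[set e in F | w \in e]| = \sum_f ((f \in F) && (w \in f) : nat).
  by rewrite -card_setE; apply: eq_card => e; rewrite !inE.
under eq_bigr do rewrite E.
rewrite exchange_big /= [RHS]big_mkcond /=; apply: eq_bigr => f _.
case: (f \in F) => /=; last by rewrite big1.
by rewrite -card_setE; apply: eq_card => w; rewrite inE.
Qed.

Lemma handshake F : is_graph F -> \sum_w deg F w = 2 * #|F|.
Proof.
move=> /forallP gF; rewrite sum_deg -sum1_card big_distrr /=.
by apply: eq_bigr => f fF; have := gF f; rewrite fF /= => /eqP ->.
Qed.

Lemma card_pairs (P : 'I_n -> 'I_n -> bool) :
  #|[set p : 'I_n * 'I_n | P p.1 p.2]| = \sum_x #|[set y | P x y]|.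
Proof.
rewrite card_setE -(pair_big xpredT xpredT (fun x y => (P x y : nat))) /=.
by apply: eq_bigr => x _; rewrite card_setE.
Qed.

Lemma card_pairs_swap (P : 'I_n -> 'I_n -> bool) :
  #|[set p : 'I_n * 'I_n | P p.1 p.2]| = #|[set p : 'I_n * 'I_n | P p.2 p.1]|.
Proof.
rewrite !card_setE.
rewrite -(pair_big xpredT xpredT (fun x y => (P x y : nat))) /=.
rewrite -(pair_big xpredT xpredT (fun x y => (P y x : nat))) /=.
by rewrite exchange_big.
Qed.

Lemma card_pairs_fst (Q : 'I_n -> 'I_n -> bool) x0 :
  #|[set p : 'I_n * 'I_n | (p.1 == x0) && Q p.1 p.2]| = #|[set y | Q x0 y]|.
Proof.
rewrite (card_pairs (fun a b => (a == x0) && Q a b)) (bigD1 x0) //= big1 ?addn0.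
  by apply: eq_card => y; rewrite !inE eqxx.
move=> x /negbTE xx; apply/eqP; rewrite cards_eq0; apply/eqP/setP => y.
by rewrite !inE xx.
Qed.

End Basics.
End Part1.
Import Part1.

Module Part2.

Section Deltas.
Variables (n : nat) (d : 'I_n -> nat).

Lemma graphs_degP G : G \in graphs_deg d -> is_graph G /\ forall i, deg G i = d i.
Proof. by rewrite inE => /andP[gG /forallP dG]; split => // i; apply/eqP. Qed.

Lemma d_le_Delta i : d i <= Delta d.
Proof. exact: leq_bigmax. Qed.

Lemma Delta_le_n : graphical d -> Delta d <= n.
Proof.
rewrite /graphical; case/set0Pn => G /graphs_degP [gG dG].
apply/bigmax_leqP => i _; rewrite -dG -card_nbr //.
by apply: leq_trans (max_card _) _; rewrite card_ord.
Qed.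

Lemma dsum_sub (A B : {set 'I_n}) : A \subset B -> dsum d A <= dsum d B.
Proof.
move=> /fintype.subsetP AB; rewrite /dsum [X in X <= _]big_mkcond [X in _ <= X]big_mkcond.
apply: leq_sum => i _; case: (boolP (i \in A)) => // /AB -> //.
Qed.

Lemma dsum_small (A : {set 'I_n}) : graphical d -> #|A| <= Delta d -> dsum d A <= Jsum d.
Proof.
move=> gd hA.
have: Delta d - #|A| <= #|~: A|.
  rewrite [#|~: A|]cardsCs finset.setCK leq_sub2r //; rewrite card_ord; exact: Delta_le_n.
case/card_geqP => s [us ss sA].
set B := A :|: [set x in s].
have AB : A \subset B by apply: finset.subsetUl.
have cB : #|B| = Delta d.
  rewrite /B cardsU.
  have ->: A :&: [set x in s] = finset.set0.
    apply/setP => x; rewrite !inE; apply/negbTE; apply/negP => /andP[xA xs].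
    by have := sA x xs; rewrite inE xA.
  by rewrite cards0 subn0 cardsE (card_uniqP us) ss subnKC.
apply: (leq_trans (dsum_sub AB)).
rewrite /Jsum; apply: (@leq_bigmax_cond _ (fun B : {set 'I_n} => #|B| == Delta d) (fun B : {set 'I_n} => dsum d B)).
by rewrite cB.
Qed.

Lemma Delta_le_J : graphical d -> Delta d <= Jsum d.
Proof.
move=> gd; case: (posnP (Delta d)) => [->//|Dpos].
case: (pickP (fun _ : 'I_n => true)) => [i0 _|h]; last first.
  by move: Dpos; rewrite /Delta big_pred0.
set i := [arg max_(i > i0) d i].
have Di : Delta d = d i by rewrite /Delta (bigmax_eq_arg _ i0).
have := @dsum_small [set i] gd; rewrite cards1 Dpos /dsum big_set1 -Di; apply => //.
Qed.

End Deltas.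
End Part2.
Import Part2.

Module Part3.

Definition GH n (d : 'I_n -> nat) (H : {set {set 'I_n}}) :=
  [set G in graphs_deg d | H \subset G].
Definition Kc n (d : 'I_n -> nat) := 4 * Delta d + 2 * Jsum d.

Lemma cardU_le (T : finType) (A B : {set T}) : #|A :|: B| <= #|A| + #|B|.
Proof. by rewrite cardsU leq_subr. Qed.

Lemma card_pairs_dep (A B : finType) (X : {set A}) (R : A -> B -> bool) :
  #|[set t : A * B | (t.1 \in X) && R t.1 t.2]| = \sum_(a in X) #|[set b | R a b]|.
Proof.
rewrite card_setE -(pair_big xpredT xpredT (fun a b => ((a \in X) && R a b : nat))) /=.
rewrite [RHS]big_mkcond /=; apply: eq_bigr => a _.
case: (a \in X) => /=; last by rewrite big1.
by rewrite card_setE.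
Qed.

Lemma four_eq n (a b c e w : 'I_n) : a != b -> a != c -> a != e -> b != c -> b != e -> c != e ->
  nat_of_bool ((w == a) || (w == c)) + nat_of_bool ((w == b) || (w == e)) =
  nat_of_bool ((w == a) || (w == b)) + nat_of_bool ((w == c) || (w == e)).
Proof.
move=> ab ac ae bc be ce.
have [->|wa] := eqVneq w a; first by rewrite ?(eq_sym b a) ?(eq_sym c a) ?(eq_sym e a) ?(eq_sym c b) ?(eq_sym e b) ?(eq_sym e c) ?(negbTE ab) ?(negbTE ac) ?(negbTE ae) ?(negbTE bc) ?(negbTE be) ?(negbTE ce).
have [->|wb] := eqVneq w b; first by rewrite ?(eq_sym b a) ?(eq_sym c a) ?(eq_sym e a) ?(eq_sym c b) ?(eq_sym e b) ?(eq_sym e c) ?(negbTE ab) ?(negbTE ac) ?(negbTE ae) ?(negbTE bc) ?(negbTE be) ?(negbTE ce).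
have [->|wc] := eqVneq w c; first by rewrite ?(eq_sym b a) ?(eq_sym c a) ?(eq_sym e a) ?(eq_sym c b) ?(eq_sym e b) ?(eq_sym e c) ?(negbTE ab) ?(negbTE ac) ?(negbTE ae) ?(negbTE bc) ?(negbTE be) ?(negbTE ce).
have [_|we] := eqVneq w e; first by rewrite ?(eq_sym b a) ?(eq_sym c a) ?(eq_sym e a) ?(eq_sym c b) ?(eq_sym e b) ?(eq_sym e c) ?(negbTE ab) ?(negbTE ac) ?(negbTE ae) ?(negbTE bc) ?(negbTE be) ?(negbTE ce).
by [].

Qed.

Lemma set2_neq n (a b c e : 'I_n) : a != c -> a != e -> [set a; b] != [set c; e].
Proof.
move=> ac ae; apply/eqP => h.
have : a \in [set c; e] by rewrite -h set21.
by rewrite in_set2 (negbTE ac) (negbTE ae).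
Qed.

Section Switch.
Variables (n : nat) (d : 'I_n -> nat) (H : {set {set 'I_n}}) (u v : 'I_n).
Hypotheses (uv : u != v) (eH : [set u; v] \notin H) (gd : graphical d).

Local Notation e := [set u; v].

Definition good (G : {set {set 'I_n}}) (p : 'I_n * 'I_n) :=
  [&& [set p.1; p.2] \in G, [set p.1; p.2] \notin H, p.1 \notin e, p.2 \notin e &
      ([set u; p.1] \notin G) && ([set v; p.2] \notin G)].

Definition swt (G : {set {set 'I_n}}) (p : 'I_n * 'I_n) :=
  [set u; p.1] |: ([set v; p.2] |: ((G :\ e) :\ [set p.1; p.2])).

Definition unswt (G : {set {set 'I_n}}) (p : 'I_n * 'I_n) :=
  ((G :\ [set u; p.1]) :\ [set v; p.2]) :|: [set e; [set p.1; p.2]].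

Section Fixed.
Variables (G : {set {set 'I_n}}) (x y : 'I_n).
Hypotheses (GG : G \in GH d (e |: H)) (gp : good G (x, y)).

Let facts : [/\ is_graph G, (forall i, deg G i = d i), e |: H \subset G &
   [&& [set x; y] \in G, [set x; y] \notin H, x \notin e, y \notin e &
      ([set u; x] \notin G) && ([set v; y] \notin G)]].
Proof.
move: GG; rewrite inE => /andP[/graphs_degP [g1 g2] g3].
by split.
Qed.

Lemma sw_distinct : [/\ x != y, x != u, x != v, y != u & y != v].
Proof.
case: facts => gG _ _ /and5P[xyG _ xe ye _].
move: xe ye; rewrite !in_set2 !negb_or => /andP[-> ->] /andP[-> ->]; split => //.
have /forallP/(_ [set x; y]) := gG; rewrite xyG cards2 /=.
by case: (x != y).
Qed.

Lemma sw_graph : has_degseq d (swt G (x, y)).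
Proof.
case: facts => gG dG sub /and5P[xyG xyH xe ye /andP[uxG vyG]].
case: sw_distinct => xy xu xv yu yv.
have eG : e \in G by move/fintype.subsetP: sub; apply; rewrite setU11.
apply/andP; split.
  apply/forallP => f; apply/implyP; rewrite /swt /= !inE => /or3P[/eqP->|/eqP->|].
  - by rewrite cards2 (eq_sym u x) xu.
  - by rewrite cards2 (eq_sym v y) yv.
  - by case/and3P => _ _ fG; move/forallP/(_ f): gG; rewrite fG.
apply/forallP => w; rewrite /swt /= deg_setU1 deg_setU1 -dG.
rewrite (deg_setD1 G e) (deg_setD1 (G :\ e) [set x; y]).
have e2G : [set x; y] \in G :\ e.
  by rewrite !inE xyG andbT eq_sym set2_neq // eq_sym.
rewrite eG e2G !andbT.
have -> : [set u; x] \notin [set v; y] |: (G :\ e :\ [set x; y]).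
  by rewrite !inE negb_or set2_neq ?(eq_sym u y) //= !negb_and uxG !orbT.
have -> : [set v; y] \notin (G :\ e :\ [set x; y]).
  by rewrite !inE !negb_and vyG !orbT.
have E : (w \in [set u; x]) + (w \in [set v; y]) = (w \in e) + (w \in [set x; y]).
  by rewrite !in_set2 (@four_eq _ u v x y w) // ?(eq_sym u x) ?(eq_sym u y) ?(eq_sym v x) ?(eq_sym v y).
by rewrite !andbT !addnA E.
Qed.

Lemma sw_GH : swt G (x, y) \in GH d H.
Proof.
case: facts => gG dG sub /and5P[xyG xyH xe ye /andP[uxG vyG]].
rewrite inE; apply/andP; split; first by rewrite inE sw_graph.
apply/fintype.subsetP => f fH.
have fG : f \in G by move/fintype.subsetP: sub; apply; rewrite inE fH orbT.
rewrite /swt !inE fG !andbT; apply/orP; right; apply/orP; right.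
by apply/andP; split; apply/eqP => h; move: fH; rewrite h /= ?(negbTE xyH) ?(negbTE eH).
Qed.

Lemma sw_Q : [&& [set u; x] \in swt G (x, y), [set u; x] \notin H,
                [set v; y] \in swt G (x, y) & [set v; y] \notin H].
Proof.
case: facts => gG dG sub /and5P[xyG xyH xe ye /andP[uxG vyG]].
rewrite /swt !inE !eqxx orbT /=.
apply/andP; split; apply/negP => h.
  by move: uxG; move/fintype.subsetP: sub => /(_ [set u; x]); rewrite inE h orbT => ->.
by move: vyG; move/fintype.subsetP: sub => /(_ [set v; y]); rewrite inE h orbT => ->.
Qed.

Lemma sw_K : unswt (swt G (x, y)) (x, y) = G.
Proof.
case: facts => gG dG sub /and5P[xyG xyH xe ye /andP[uxG vyG]].
case: sw_distinct => xy xu xv yu yv.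
have eG : e \in G by move/fintype.subsetP: sub; apply; rewrite setU11.
have n1 : [set u; x] != e by rewrite finset.setUC set2_neq.
have n2 : [set u; x] != [set x; y] by rewrite set2_neq // eq_sym.
have n3 : [set v; y] != e by rewrite finset.setUC set2_neq.
have n4 : [set v; y] != [set x; y] by rewrite set2_neq // eq_sym.
have n5 : [set u; x] != [set v; y] by rewrite set2_neq // eq_sym.
apply/setP => f; rewrite /unswt /swt /= !inE.
have [->|fe] := eqVneq f e; first by rewrite eG !orbT.
have [->|fxy] := eqVneq f [set x; y]; first by rewrite xyG !orbT.
have [->|fux] := eqVneq f [set u; x].
  by rewrite (negbTE uxG) ?(negbTE n1) ?(negbTE n2) ?(negbTE n5) /= ?andbF.
have [->|fvy] := eqVneq f [set v; y].
  by rewrite (negbTE vyG) ?(negbTE n3) ?(negbTE n4) /= ?andbF.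
by rewrite /= !orbF.
Qed.

End Fixed.

Lemma is_graph_sub (F G : {set {set 'I_n}}) : F \subset G -> is_graph G -> is_graph F.
Proof.
move=> /fintype.subsetP FG /forallP gG; apply/forallP => f; apply/implyP => fF.
by have := gG f; rewrite (FG f fF).
Qed.

Lemma GH_facts G H' : G \in GH d H' -> [/\ is_graph G, (forall i, deg G i = d i) & H' \subset G].
Proof. by rewrite inE => /andP[/graphs_degP [g1 g2] g3]. Qed.

Lemma card_B6 G w : G \in graphs_deg d ->
  #|[set p : 'I_n * 'I_n | ([set w; p.1] \in G) && ([set p.1; p.2] \in G)]| <= Jsum d.
Proof.
move=> /graphs_degP [gG dG].
rewrite (card_pairs (fun a b => ([set w; a] \in G) && ([set a; b] \in G))).
set Nw := [set a | [set w; a] \in G].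
have -> : \sum_x #|[set y | ([set w; x] \in G) && ([set x; y] \in G)]| = dsum d Nw.
  rewrite /dsum [RHS]big_mkcond /=; apply: eq_bigr => a _; rewrite inE.
  case: ([set w; a] \in G) => /=; first by rewrite card_nbr // dG.
  by apply/eqP; rewrite cards_eq0; apply/eqP/setP => b; rewrite !inE.
apply: dsum_small; first exact: gd.
by rewrite /Nw card_nbr // dG d_le_Delta.
Qed.

Lemma card_B7 G w : G \in graphs_deg d ->
  #|[set p : 'I_n * 'I_n | ([set w; p.2] \in G) && ([set p.1; p.2] \in G)]| <= Jsum d.
Proof.
move=> GG; rewrite (card_pairs_swap (fun a b => ([set w; b] \in G) && ([set a; b] \in G))).
apply: leq_trans (card_B6 w GG); apply: eq_leq; apply: eq_card => p; rewrite !inE.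
by rewrite [[set p.2; p.1]]finset.setUC.
Qed.

Lemma card_Bx G w : G \in graphs_deg d ->
  #|[set p : 'I_n * 'I_n | (p.1 == w) && ([set p.1; p.2] \in G)]| <= Delta d.
Proof.
move=> /graphs_degP [gG dG].
rewrite (card_pairs_fst (fun a b => [set a; b] \in G)) card_nbr // dG; exact: d_le_Delta.
Qed.

Lemma card_By G w : G \in graphs_deg d ->
  #|[set p : 'I_n * 'I_n | (p.2 == w) && ([set p.1; p.2] \in G)]| <= Delta d.
Proof.
move=> GG; rewrite (card_pairs_swap (fun a b => (b == w) && ([set a; b] \in G))).
apply: leq_trans (card_Bx w GG); apply: eq_leq; apply: eq_card => p; rewrite !inE.
by rewrite finset.setUC.
Qed.

Lemma good_lower G : G \in GH d (e |: H) ->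
  Msum d <= #|[set p | good G p]| + (2 * #|H| + 2 + Kc d).
Proof.
move=> GG; have [gG dG sub] := GH_facts GG.
have GD : G \in graphs_deg d by move: GG; rewrite inE => /andP[].
have M1 : Msum d <= #|[set p : 'I_n * 'I_n | [set p.1; p.2] \in G]|.
  rewrite (card_pairs (fun a b => [set a; b] \in G)) /Msum; apply: leq_sum => w _.
  by rewrite card_nbr // dG.
apply: (leq_trans M1).
set E2 := [set p : 'I_n * 'I_n | [set p.1; p.2] \in G].
set B1 := [set p : 'I_n * 'I_n | [set p.1; p.2] \in e |: H].
set Bxu := [set p : 'I_n * 'I_n | (p.1 == u) && ([set p.1; p.2] \in G)].
set Bxv := [set p : 'I_n * 'I_n | (p.1 == v) && ([set p.1; p.2] \in G)].
set Byu := [set p : 'I_n * 'I_n | (p.2 == u) && ([set p.1; p.2] \in G)].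
set Byv := [set p : 'I_n * 'I_n | (p.2 == v) && ([set p.1; p.2] \in G)].
set B6 := [set p : 'I_n * 'I_n | ([set u; p.1] \in G) && ([set p.1; p.2] \in G)].
set B7 := [set p : 'I_n * 'I_n | ([set v; p.2] \in G) && ([set p.1; p.2] \in G)].
set Gd := [set p | good G p].
have sE : E2 \subset Gd :|: B1 :|: Bxu :|: Bxv :|: Byu :|: Byv :|: B6 :|: B7.
  apply/fintype.subsetP => [[a b]]; rewrite /E2 /Gd /B1 /Bxu /Bxv /Byu /Byv /B6 /B7 /good !inE /= => abG.
  rewrite abG !andbT /=.
  by case: ([set a; b] \in H); case: (a == u); case: (a == v); case: (b == u); case: (b == v);
     case: ([set u; a] \in G); case: ([set v; b] \in G); rewrite /= ?orbT.
have cB1 : #|B1| <= 2 * #|H| + 2.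
  rewrite /B1 (card_pairs (fun a b => [set a; b] \in e |: H)).
  have gF : is_graph (e |: H) by apply: is_graph_sub sub gG.
  under eq_bigr do rewrite card_nbr //.
  by rewrite handshake // cardsU1 eH mulnDr muln1 addnC.
apply: (leq_trans (subset_leq_card sE)).
have := cardU_le (Gd :|: B1 :|: Bxu :|: Bxv :|: Byu :|: Byv :|: B6) B7.
have := cardU_le (Gd :|: B1 :|: Bxu :|: Bxv :|: Byu :|: Byv) B6.
have := cardU_le (Gd :|: B1 :|: Bxu :|: Bxv :|: Byu) Byv.
have := cardU_le (Gd :|: B1 :|: Bxu :|: Bxv) Byu.
have := cardU_le (Gd :|: B1 :|: Bxu) Bxv.
have := cardU_le (Gd :|: B1) Bxu.
have := cardU_le Gd B1.
have c1 : #|Bxu| <= Delta d := card_Bx u GD.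
have c2 : #|Bxv| <= Delta d := card_Bx v GD.
have c3 : #|Byu| <= Delta d := card_By u GD.
have c4 : #|Byv| <= Delta d := card_By v GD.
have c5 : #|B6| <= Jsum d := card_B6 u GD.
have c6 : #|B7| <= Jsum d := card_B7 v GD.
rewrite /Kc; lia.
Qed.

Lemma nbr_noH G w : G \in GH d H ->
  #|[set y | ([set w; y] \in G) && ([set w; y] \notin H)]| <= d w - deg H w.
Proof.
move=> GG; have [gG dG sub] := GH_facts GG.
apply: (leq_trans (card_nbr_le w (fun f => f \notin H) gG)).
have -> : [set f in G | (w \in f) && (f \notin H)] =
          [set f in G | w \in f] :\: [set f in H | w \in f].
  apply/setP => f; rewrite !inE.
  by case: (f \in H); case: (f \in G); case: (w \in f).
rewrite cardsD; have -> : [set f in G | w \in f] :&: [set f in H | w \in f] = [set f in H | w \in f].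
  apply/finset.setIidPr; apply/fintype.subsetP => f; rewrite !inE => /andP[fH ->].
  by move/fintype.subsetP: sub => /(_ f fH) ->.
by rewrite -dG.
Qed.

Definition Qc (G : {set {set 'I_n}}) (p : 'I_n * 'I_n) :=
  [&& [set u; p.1] \in G, [set u; p.1] \notin H, [set v; p.2] \in G & [set v; p.2] \notin H].

Lemma Q_upper G : G \in GH d H ->
  #|[set p | Qc G p]| <= (d u - deg H u) * (d v - deg H v).
Proof.
move=> GG.
have -> : [set p | Qc G p] = finset.setX [set y | ([set u; y] \in G) && ([set u; y] \notin H)]
                                   [set y | ([set v; y] \in G) && ([set v; y] \notin H)].
  by apply/setP => [[a b]]; rewrite !inE /Qc /= !andbA.
by rewrite cardsX leq_mul // nbr_noH.
Qed.

Lemma switching :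
  #|GH d (e |: H)| * (Msum d - (2 * #|H| + 2 + Kc d)) <=
  (d u - deg H u) * (d v - deg H v) * #|GH d H|.
Proof.
set P := [set t : {set {set 'I_n}} * ('I_n * 'I_n) | (t.1 \in GH d (e |: H)) && good t.1 t.2].
set Q := [set t : {set {set 'I_n}} * ('I_n * 'I_n) | (t.1 \in GH d H) && Qc t.1 t.2].
have h1 : #|GH d (e |: H)| * (Msum d - (2 * #|H| + 2 + Kc d)) <= #|P|.
  rewrite /P (card_pairs_dep (GH d (e |: H)) good) -sum_nat_const.
  apply: leq_sum => G GG; rewrite leq_subLR addnC; exact: good_lower.
have h2 : #|P| <= #|Q|.
  rewrite -(@card_in_imset _ _ (fun t => (swt t.1 t.2, t.2)) P); last first.
    move=> [G1 [x1 y1]] [G2 [x2 y2]] /[1!inE] /= /andP[G1G g1] /[1!inE] /= /andP[G2G g2] [eqG eqx eqy].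
    subst x2 y2; congr (_, _).
    by rewrite -(sw_K G1G g1) eqG (sw_K G2G g2).
  apply: subset_leq_card; apply/fintype.subsetP => t /imsetP [[G [x y]]]; rewrite inE /= => /andP[GG gp] ->.
  by rewrite inE /= sw_GH // /Qc /= sw_Q.
have h3 : #|Q| <= (d u - deg H u) * (d v - deg H v) * #|GH d H|.
  rewrite /Q (card_pairs_dep (GH d H) Qc) mulnC -sum_nat_const.
  by apply: leq_sum => G GG; exact: Q_upper.
exact: leq_trans h1 (leq_trans h2 h3).
Qed.

End Switch.
End Part3.
Import Part3.

Module Part4.

Section Count.
Variables (n : nat) (d : 'I_n -> nat) (S1 S2 : {set 'I_n}).
Hypothesis gd : graphical d.

Definition epair (p : 'I_n * 'I_n) : {set 'I_n} := [set p.1; p.2].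
Definition condp (H : {set {set 'I_n}}) (p : 'I_n * 'I_n) :=
  [&& p.1 \in S1, p.2 \in S2 & epair p \notin H].

Fixpoint cnt k (G H : {set {set 'I_n}}) : nat :=
  if k is k'.+1 then \sum_(p | condp H p && (epair p \in G)) cnt k' G (epair p |: H)
  else 1.

Definition Bk k H := \sum_(G in GH d H) cnt k G H.

Lemma GH_U1 (f : {set 'I_n}) (H G : {set {set 'I_n}}) : (G \in GH d (f |: H)) = (G \in GH d H) && (f \in G).
Proof.
rewrite !inE finset.subUset finset.sub1set.
by case: (has_degseq d G); case: (H \subset G); case: (f \in G).
Qed.

Lemma Bk_rec k H : Bk k.+1 H = \sum_(p | condp H p) Bk k (epair p |: H).
Proof.
rewrite /Bk /=.
rewrite (exchange_big_dep (condp H)) /=; last by move=> G p _ /andP[].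
apply: eq_bigr => p cp; apply: eq_bigl => G.
by rewrite GH_U1 cp.
Qed.

Definition E12 (f : {set 'I_n}) := [exists u in S1, exists v in S2, f == [set u; v]].

Lemma cnt_lower k (G H : {set {set 'I_n}}) :
  #|[set f in G | E12 f && (f \notin H)]| ^_ k <= cnt k G H.
Proof.
elim: k H => [|k IH] H /=; first by rewrite ffactn0.
set Sm := [set f in G | E12 f && (f \notin H)].
set Pc := [set p | condp H p && (epair p \in G)].
have step : forall p, p \in Pc -> #|Sm|.-1 ^_ k <= cnt k G (epair p |: H).
  move=> p; rewrite inE => /andP[cp pG]; apply: leq_trans (IH _).
  have -> : [set f in G | E12 f && (f \notin epair p |: H)] = Sm :\ epair p.
    apply/setP => f; rewrite !inE negb_or.
    by case: (f == epair p); case: (f \in G); case: (E12 f); case: (f \in H).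
  have : epair p \in Sm.
    move: cp; rewrite /condp => /and3P[p1 p2 pH].
    rewrite inE pG pH andbT; apply/existsP; exists p.1; rewrite p1 /=.
    by apply/existsP; exists p.2; rewrite p2 /=.
  by move=> pS; rewrite (cardsD1 (epair p) Sm) pS add1n.
have cPc : #|Sm| <= #|Pc|.
  apply: leq_trans (leq_imset_card epair Pc); apply: subset_leq_card.
  apply/fintype.subsetP => f; rewrite inE => /andP[fG /andP[/existsP[a /andP[aS1 /existsP[b /andP[bS2 /eqP fab]]]] fH]].
  apply/imsetP; exists (a, b); last by rewrite fab.
  by rewrite inE /condp /epair /= aS1 bS2 -fab fH fG.
apply: (@leq_trans (\sum_(p | condp H p && (epair p \in G)) #|Sm|.-1 ^_ k)).
  rewrite sum_nat_cond_const -/Pc ffactnS.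
  by rewrite leq_mul2r cPc orbT.
by apply: leq_sum => p cp; apply: step; rewrite inE.
Qed.

Lemma sum_deg_S (S : {set 'I_n}) (H : {set {set 'I_n}}) :
  [forall f in H, [exists a in S, a \in f]] -> #|H| <= \sum_(a in S) deg H a.
Proof.
move=> /forallP hH.
have -> : \sum_(a in S) deg H a = \sum_(f in H) #|[set a in S | a \in f]|.
  rewrite /deg.
  have E a : #|[set e in H | a \in e]| = \sum_(f in H) (a \in f : nat).
    by rewrite -sum1_card big_mkcond [RHS]big_mkcond; apply: eq_bigr => f _; rewrite !inE; case: (f \in H).
  under eq_bigr do rewrite E.
  rewrite (exchange_big_dep (fun f => f \in H)) //=; apply: eq_bigr => f fH.
  under eq_bigl do rewrite fH andbT.
  rewrite -sum1_card big_mkcond [RHS]big_mkcond /=; apply: eq_bigr => a _; rewrite !inE.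
  by case: (a \in S); case: (a \in f).
rewrite -sum1_card; apply: leq_sum => f fH.
have := hH f; rewrite fH /= => /existsP[a /andP[aS af]].
by rewrite card_gt0; apply/set0Pn; exists a; rewrite inE aS af.
Qed.

Lemma sum_free (S : {set 'I_n}) (H G : {set {set 'I_n}}) : G \in GH d H ->
  [forall f in H, [exists a in S, a \in f]] ->
  \sum_(a in S) (d a - deg H a) <= dsum d S - #|H|.
Proof.
move=> GG hH; have [gG dG sub] := GH_facts GG.
rewrite sumnB; last by move=> a _; rewrite -dG deg_sub.
by apply: leq_sub2l; exact: sum_deg_S.
Qed.

Definition Dn h := Msum d - (2 * h + 2 + Kc d).

Lemma Bk_step (H : {set {set 'I_n}}) (G0 : {set {set 'I_n}}) : G0 \in GH d H ->
  [forall f in H, [exists a in S1, a \in f]] ->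
  [forall f in H, [exists a in S2, a \in f]] ->
  \sum_(p | condp H p) #|GH d (epair p |: H)| * Dn #|H| <=
  (dsum d S1 - #|H|) * (dsum d S2 - #|H|) * #|GH d H|.
Proof.
move=> G0G h1 h2.
apply: (@leq_trans (\sum_(p | (p.1 \in S1) && (p.2 \in S2))
          (d p.1 - deg H p.1) * (d p.2 - deg H p.2) * #|GH d H|)).
  apply: (@leq_trans (\sum_(p | condp H p) (d p.1 - deg H p.1) * (d p.2 - deg H p.2) * #|GH d H|)).
    apply: leq_sum => [[a b]] /and3P[/= aS bS pH].
    have [ab|ab] := eqVneq a b.
      subst b; have -> : GH d (epair (a, a) |: H) = finset.set0.
        apply/setP => G; rewrite finset.in_set0; apply/negbTE/negP => GG.
        have [gG _ sub] := GH_facts GG.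
        move: sub; rewrite finset.subUset finset.sub1set => /andP[aG _].
        by move/forallP/(_ (epair (a, a))): gG; rewrite aG /epair /= finset.setUid cards1.
      by rewrite cards0.
    exact: switching ab pH gd.
  rewrite [X in _ <= X](bigID (fun p => epair p \notin H)) /=.
  apply: leq_trans (leq_addr _ _); apply: eq_leq; apply: eq_bigl => p.
  by rewrite /condp andbA.
rewrite -big_distrl /= leq_mul2r; apply/orP; right.
rewrite -(pair_big (fun a => a \in S1) (fun b => b \in S2) (fun a b => (d a - deg H a) * (d b - deg H b))) /=.
rewrite -big_distrlr /=.
by apply: leq_mul; apply: sum_free G0G _.
Qed.

End Count.
End Part4.
Import Part4.

Module Part5.
Local Open Scope ring_scope.

Section Real.
Variables (R : realFieldType) (n : nat) (d : 'I_n -> nat) (S1 S2 : {set 'I_n}).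
Hypothesis gd : graphical d.

Definition Fk (h : nat) : R :=
  ((dsum d S1 - h) * (dsum d S2 - h))%:R / (Dn d h)%:R.

Lemma Fk_ge0 h : 0 <= Fk h.
Proof. by rewrite /Fk divr_ge0 // ler0n. Qed.

Lemma Bk_upper k (H : {set {set 'I_n}}) :
  [forall f in H, [exists a in S1, a \in f]] ->
  [forall f in H, [exists a in S2, a \in f]] ->
  (2 * (#|H| + k) + Kc d < Msum d)%N ->
  ((Bk d S1 S2 k H)%:R : R) <= #|GH d H|%:R * \prod_(i < k) Fk (#|H| + i).
Proof.
elim: k H => [|k IH] H h1 h2 hk.
  by rewrite big_ord0 mulr1 /Bk /= sum1_card.
case: (boolP (GH d H == finset.set0)) => [/eqP E|/set0Pn [G0 G0G]].
  by rewrite /Bk E big_set0 cards0 mul0r.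
rewrite Bk_rec natr_sum.
set h := #|H|.
set Pi := \prod_(i < k) Fk (h.+1 + i).
have Pi0 : 0 <= Pi by apply: prodr_ge0 => i _; exact: Fk_ge0.
have stepIH : forall p, condp S1 S2 H p ->
    ((Bk d S1 S2 k (epair p |: H))%:R : R) <= #|GH d (epair p |: H)|%:R * Pi.
  move=> p cp; move: (cp); rewrite /condp => /and3P[p1 p2 pH].
  have cH : #|epair p |: H| = h.+1 by rewrite cardsU1 pH.
  have := IH (epair p |: H); rewrite cH; apply.
  - apply/forallP => f; apply/implyP; rewrite !inE => /orP[/eqP->|fH].
      by apply/existsP; exists p.1; rewrite p1 /epair set21.
    by move/forallP/(_ f): h1; rewrite fH.
  - apply/forallP => f; apply/implyP; rewrite !inE => /orP[/eqP->|fH].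
      by apply/existsP; exists p.2; rewrite p2 /epair set22.
    by move/forallP/(_ f): h2; rewrite fH.
  - move: hk; rewrite -/h; lia.
apply: (@le_trans _ _ (\sum_(p | condp S1 S2 H p) #|GH d (epair p |: H)|%:R * Pi)).
  by apply: ler_sum => p cp; exact: stepIH.
rewrite -big_distrl /= big_ord_recl /= addn0.
have -> : \prod_(i < k) Fk (h + bump 0 i) = Pi.
  by apply: eq_bigr => i _; rewrite /bump /= add1n addSnnS.
rewrite mulrA; apply: ler_wpM2r => //.
have Dpos : (0 < Dn d h)%N by rewrite /Dn; move: hk; rewrite -/h; lia.
rewrite /Fk mulrA ler_pdivlMr ?ltr0n // -natr_sum -!natrM ler_nat.
rewrite big_distrl /= mulnC; exact: (Bk_step gd G0G h1 h2).
Qed.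

End Real.
End Part5.
Import Part5.

Module Part6.

Lemma ffact_prod m k : m ^_ k = \prod_(i < k) (m - i).
Proof.
elim: k => [|k IH]; first by rewrite big_ord0 ffactn0.
by rewrite ffactnSr big_ord_recr /= IH.
Qed.

Lemma ffact_mono m m' k : m <= m' -> m ^_ k <= m' ^_ k.
Proof.
by move=> mm; rewrite !ffact_prod; apply: leq_prod => i _; apply: leq_sub2r.
Qed.

Local Open Scope ring_scope.

Lemma prob_bound (R : realType) n (d : 'I_n -> nat) (S1 S2 : {set 'I_n}) (l : nat) :
  graphical d -> (2 * l + Kc d < Msum d)%N ->
  prob_e_ge R d S1 S2 l <= ('C(dsum d S1, l))%:R * ((dsum d S2) ^_ l)%:R *
                           \prod_(i < l) ((Dn d i)%:R)^-1.
Proof.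
move=> gd hl.
set GD := graphs_deg d.
set X := [set E in GD | (l <= eS E S1 S2)%N].
have GH0 : GH d finset.set0 = GD by apply/setP => G; rewrite inE finset.sub0set andbT.
have cnt_ge : (#|X| * l`! <= Bk d S1 S2 l finset.set0)%N.
  rewrite /Bk GH0 -sum_nat_const [X in (_ <= X)%N](bigID (fun G => (l <= eS G S1 S2)%N)) /=.
  apply: leq_trans (leq_addr _ _).
  rewrite [X in (X <= _)%N](eq_bigl (fun G => (G \in GD) && (l <= eS G S1 S2)%N)); last first.
    by move=> G; rewrite inE.
  apply: leq_sum => G /andP[GG hG].
  apply: leq_trans (cnt_lower S1 S2 l G finset.set0).
  rewrite -ffactnn; apply: ffact_mono; apply: (leq_trans hG).
  rewrite /eS; apply: eq_leq; apply: eq_card => f; rewrite !inE /E12.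
  by rewrite /= andbT.
have Bup := @Bk_upper R n d S1 S2 gd l finset.set0.
rewrite cards0 GH0 in Bup.
have h01 : [forall f in (finset.set0 : {set {set 'I_n}}), [exists a in S1, a \in f]].
  by apply/forallP => f; rewrite inE.
have h02 : [forall f in (finset.set0 : {set {set 'I_n}}), [exists a in S2, a \in f]].
  by apply/forallP => f; rewrite inE.
have hl' : (2 * (0 + l) + Kc d < Msum d)%N by rewrite add0n.
have {}Bup := Bup h01 h02 hl'.
have GDpos : (0 < #|GD|)%N by rewrite card_gt0.
have lpos : (0 < l`!)%N by apply: fact_gt0.
rewrite /prob_e_ge -/GD -/X ler_pdivrMr ?ltr0n //.
rewrite -(@ler_pM2r _ (l`!)%:R) ?ltr0n //.
apply: (@le_trans _ _ (Bk d S1 S2 l finset.set0)%:R); first by rewrite -natrM ler_nat.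
apply: (le_trans Bup).
have -> : \prod_(i < l) Fk R d S1 S2 (0 + i) =
          ((dsum d S1) ^_ l)%:R * ((dsum d S2) ^_ l)%:R * \prod_(i < l) ((Dn d i)%:R)^-1.
  rewrite !ffact_prod !natr_prod -!big_split /=; apply: eq_bigr => i _.
  by rewrite /Fk add0n natrM.
rewrite -bin_ffact natrM.
rewrite le_eqVlt; apply/orP; left; apply/eqP; ring.
Qed.
End Part6.
Import Part6.

Module Part7.
Local Open Scope ring_scope.

Lemma Msum_le_Delta n (d : 'I_n -> nat) : (Msum d <= n * Delta d)%N.
Proof.
rewrite /Msum; apply: (@leq_trans (\sum_(i < n) Delta d)).
  by apply: leq_sum => i _; exact: d_le_Delta.
by rewrite sum_nat_const card_ord.
Qed.

Lemma J_ge1 n (d : 'I_n -> nat) : graphical d -> (0 < Msum d)%N -> (1 <= Jsum d)%N.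
Proof.
move=> gd M0; apply: leq_trans (Delta_le_J gd).
case: (posnP (Delta d)) => // D0; move: M0 (Msum_le_Delta d); rewrite D0 muln0; lia.
Qed.

Lemma factor_le (R : realFieldType) (Mr ir lr Kp eps : R) :
  ir + 1 <= lr -> 2 <= Kp -> 2 * Kp <= Mr - 2 * lr -> eps * (Mr - 2 * lr) = 2 * Kp ->
  (Mr - 2 * ir - Kp)^-1 <= (1 + eps) / (Mr - 2 * (ir + 1) + 2).
Proof.
move=> hi hK hL he.
have Lpos : 0 < Mr - 2 * lr by lra.
have eps0 : 0 <= eps.
  have : 0 <= eps * (Mr - 2 * lr) by rewrite he; lra.
  by rewrite pmulr_lge0.
have eps1 : eps <= 1.
  have : eps * (Mr - 2 * lr) <= 1 * (Mr - 2 * lr) by rewrite he mul1r.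
  by rewrite ler_pM2r.
have -> : Mr - 2 * (ir + 1) + 2 = Mr - 2 * ir by ring.
have Xp : 0 < Mr - 2 * ir by lra.
have XKp : 0 < Mr - 2 * ir - Kp by lra.
rewrite ler_pdivlMr // -[X in X <= _]mulrC ler_pdivrMr //.
have h1 : 0 <= eps * ((Mr - 2 * ir) - (Mr - 2 * lr)) by apply: mulr_ge0 => //; lra.
have h2 : 0 <= (1 - eps) * Kp by apply: mulr_ge0; lra.
nra.
Qed.

Lemma prod_identity (R : realType) (Mr eps : R) (l : nat) :
  \prod_(1 <= i < l.+1) ((1 + eps) / (Mr - 2 * i%:R + 2)) =
  (falling (Mr / 2) l * (2 / (1 + eps)) ^+ l)^-1.
Proof.
rewrite big_add1 /= big_mkord /falling.
have E : forall i : 'I_l, (1 + eps) / (Mr - 2 * (i.+1)%:R + 2) = (1 + eps) / 2 * (Mr / 2 - i%:R)^-1.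
  move=> i; have -> : Mr - 2 * (i.+1)%:R + 2 = 2 * (Mr / 2 - i%:R).
    by rewrite -addn1 natrD; field.
  by rewrite invfM mulrA.
under eq_bigr do rewrite E.
rewrite big_split /= prodr_const card_ord prodfV invfM mulrC; congr (_ * _).
by rewrite -exprVn invf_div.
Qed.

Lemma main_n (R : realType) n (d : 'I_n -> nat) (S1 S2 : {set 'I_n}) (l : nat) :
  graphical d ->
  2 * ((2 + Kc d)%N)%:R <= (Msum d)%:R - 2 * l%:R :> R ->
  prob_e_ge R d S1 S2 l
    <= ('C(dsum d S1, l))%:R * ((dsum d S2) ^_ l)%:R
       * \prod_(1 <= i < l.+1) ((1 + 2 * ((2 + Kc d)%N)%:R / ((Msum d)%:R - 2 * l%:R))
                                 / ((Msum d)%:R - 2 * i%:R + 2)).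
Proof.
move=> gd.
set Kp : R := ((2 + Kc d)%N)%:R.
set Lr : R := (Msum d)%:R - 2 * l%:R.
move=> hK.
have Kp2 : 2 <= Kp by rewrite /Kp natrD ler_wpDr // ler0n.
have Lpos : 0 < Lr by lra.
have hnat : (2 * l + Kc d < Msum d)%N.
  have : ((2 * l + (2 + Kc d))%N%:R < (Msum d)%:R :> R).
    by rewrite natrD natrM -/Kp; move: hK; rewrite /Lr; lra.
  by rewrite ltr_nat; lia.
apply: (le_trans (prob_bound R S1 S2 gd hnat)).
apply: ler_wpM2l; first by rewrite mulr_ge0 ?ler0n.
rewrite big_add1 /= big_mkord; apply: ler_prod => i _.
have hi : (2 * i + 2 + Kc d <= Msum d)%N by have := ltn_ord i; lia.
have hD : ((Dn d i)%:R : R) = (Msum d)%:R - 2 * i%:R - Kp.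
  by rewrite /Dn natrB // !natrD ?natrM /Kp ?natrD; ring.
rewrite hD; apply/andP; split.
  by rewrite invr_ge0 -hD ler0n.
have -> : (i.+1)%:R = i%:R + 1 :> R by rewrite -addn1 natrD.
apply: (@factor_le R (Msum d)%:R i%:R l%:R Kp) => //.
- by rewrite -[1]/(1%:R) -natrD ler_nat addn1 ltn_ord.
- by rewrite -/Lr divfK // lt0r_neq0.
Qed.
End Part7.
Import Part7.

Local Open Scope classical_set_scope.
Local Open Scope ring_scope.
Lemma ev_le (R : realType) (r : nat -> R) : r n @[n --> \oo] --> 0 ->
  forall e : R, 0 < e -> exists N, forall n, (N <= n)%N -> `|r n| <= e.
Proof.
move=> hr e e0; have := cvgr0_norm_le r hr e e0; case => N _ hN.
by exists N => n nN; apply: hN.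
Qed.

Lemma squeeze0 (R : realType) (r f : nat -> R) (c : R) (N : nat) :
  r n @[n --> \oo] --> 0 ->
  (forall n, (N <= n)%N -> 0 <= f n <= c * r n) -> f n @[n --> \oo] --> 0.
Proof.
move=> hr hf.
apply: (@squeeze_cvgr _ _ _ _ (fun _ => 0) (fun n => c * r n) f).
- by exists N => // n /= nN; apply: hf.
- exact: cvg_cst.
- by rewrite -(mulr0 c); apply: cvgM => //; exact: cvg_cst.
Qed.

Theorem corollary1p8 (R : realType) (d : forall n : nat, 'I_n -> nat)
    (S1 S2 : forall n : nat, {set 'I_n}) (l : nat -> nat) :
  (exists N0 : nat, forall n : nat, (N0 <= n)%N ->
     graphical (d n) /\ (1 <= l n)%N /\ (2 * l n < Msum (d n))%N) ->
  ((Jsum (d n))%:R / ((Msum (d n))%:R - 2 * (l n)%:R) : R) @[n --> \oo] --> 0 ->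
  exists eps delta : nat -> R,
    eps n @[n --> \oo] --> 0 /\ delta n @[n --> \oo] --> 0 /\
    exists N : nat, forall n : nat, (N <= n)%N ->
      prob_e_ge R (d n) (S1 n) (S2 n) (l n)
        <= ('C(dsum (d n) (S1 n), l n))%:R * ((dsum (d n) (S2 n)) ^_ (l n))%:R
           * \prod_(1 <= i < (l n).+1) ((1 + eps n) / ((Msum (d n))%:R - 2 * i%:R + 2))
      /\
      ('C(dsum (d n) (S1 n), l n))%:R * ((dsum (d n) (S2 n)) ^_ (l n))%:R
           * \prod_(1 <= i < (l n).+1) ((1 + eps n) / ((Msum (d n))%:R - 2 * i%:R + 2))
        <= ('C(dsum (d n) (S1 n), l n))%:R * ((dsum (d n) (S2 n)) ^_ (l n))%:R
           / (falling ((Msum (d n))%:R / 2) (l n) * (2 + delta n) ^+ (l n)).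
Proof.
move=> [N0 hN0] hrho.
set rho := fun n => ((Jsum (d n))%:R / ((Msum (d n))%:R - 2 * (l n)%:R) : R).
have hrho' : rho n @[n --> \oo] --> 0 by exact: hrho.
set Kp := fun n => (((2 + Kc (d n))%N)%:R : R).
set Lr := fun n => ((Msum (d n))%:R - 2 * (l n)%:R : R).
set eps := fun n => 2 * Kp n / Lr n.
have facts : forall n, (N0 <= n)%N ->
    [/\ graphical (d n), 0 < Lr n, 2 <= Kp n, Kp n <= 8 * (Jsum (d n))%:R & 0 <= eps n <= 16 * rho n].
  move=> n nN; have [gd [l1 lM]] := hN0 n nN.
  have Lpos : 0 < Lr n.
    have : ((2 * l n)%N%:R < (Msum (d n))%:R :> R) by rewrite ltr_nat.
    by rewrite natrM /Lr; lra.
  have J1 := J_ge1 gd (leq_ltn_trans (leq0n _) lM).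
  have DJ := Delta_le_J gd.
  have K8 : Kp n <= 8 * (Jsum (d n))%:R.
    have : ((2 + Kc (d n))%N%:R <= (8 * Jsum (d n))%N%:R :> R) by rewrite ler_nat /Kc; lia.
    by rewrite natrM.
  have K2 : 2 <= Kp n by rewrite /Kp natrD ler_wpDr // ler0n.
  split => //; apply/andP; split.
    by rewrite /eps divr_ge0 //; [lra | exact: ltW].
  rewrite /eps /rho -/(Lr n) mulrA ler_pM2r ?invr_gt0 //; lra.
have eps0 : eps n @[n --> \oo] --> 0.
  by apply: (@squeeze0 R rho eps 16 N0) => // n nN; case: (facts n nN).
exists eps, (fun n => 2 / (1 + eps n) - 2); split => //; split.
  apply: (@squeeze_cvgr _ _ _ _ (fun n => - (2 * eps n)) (fun _ => 0)).
  - exists N0 => // n /= nN; have [_ _ _ _ /andP[e0 _]] := facts n nN.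
    have e1 : 0 < 1 + eps n by lra.
    apply/andP; split.
      rewrite lerBrDr ler_pdivlMr //; nra.
    by rewrite subr_le0 ler_pdivrMr //; lra.
  - by rewrite -oppr0 -(mulr0 2); apply: cvgN; apply: cvgM => //; exact: cvg_cst.
  - exact: cvg_cst.
have h16 : (0 : R) < 1 / 16 by rewrite divr_gt0.
have [N1 hN1] := ev_le hrho' h16.
exists (maxn N0 N1) => n; rewrite geq_max => /andP[nN0 nN1].
have [gd Lpos K2 K8 /andP[e0 e16]] := facts n nN0.
have r16 := hN1 n nN1.
have hK : 2 * Kp n <= Lr n.
  have : rho n <= 1 / 16 by apply: le_trans (ler_norm _) r16.
  rewrite /rho -/(Lr n) ler_pdivrMr // => h.
  lra.
split.
  move: hK; rewrite /eps /Kp /Lr => hK; exact: (main_n (S1 n) (S2 n) gd hK).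
rewrite le_eqVlt; apply/orP; left; apply/eqP.
have -> : 2 + (2 / (1 + eps n) - 2) = 2 / (1 + eps n) by ring.
by rewrite prod_identity.
Qed.
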